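(* Let $k\ge 3$ and let $G=G_1\ast G_2\ast\dots\ast G_k$ be a free product of freely indecomposable groups such that $G_i$ is not infinite cyclic for $i\ge 3$. Let $p\colon G\to G_1\ast G_2$ be the projection that is the identity on $G_1$ and $G_2$ and trivial on $G_3,\dots,G_k$. Then $\ker(p)$ is invariant under every automorphism in $\mathrm{Aut}^0(G)$.
   Context: A group is freely indecomposable if non-trivial and not a free product of two non-trivial groups. For a free product $G=G_1\ast\dots\ast G_k$, $\mathrm{Aut}^0(G)$ is the subgroup of $\mathrm{Aut}(G)$ generated by: factor automorphisms (apply an automorphism of one factor $G_i$ and fix all other factors); transvections (if $G_i=\langle v\rangle$ is infinite cyclic and $w\in G_j$ with $j\ne i$, send $v\mapsto vw$ or $v\mapsto wv$ and fix all other factors); partial conjugations (for $i\neq j$ and $g\in G_j$, conjugate every element of $G_i$ by $g$ and fix all other factors). *)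

(* Defs.v *)
From Stdlib Require Import ZArith.
From mathcomp Require Import all_boot.
Set Implicit Arguments. Unset Strict Implicit. Unset Printing Implicit Defensive.

Record group := Group {
  carrier :> Type;
  gmul : carrier -> carrier -> carrier;
  gone : carrier;
  ginv : carrier -> carrier;
  gmulA : forall x y z, gmul x (gmul y z) = gmul (gmul x y) z;
  gmul1 : forall x, gmul gone x = x;
  gmulV : forall x, gmul (ginv x) x = gone }.
Arguments gmul {g}. Arguments gone {g}. Arguments ginv {g}.

Section Groups.
Variable G : group.

Definition subgroup (S : G -> Prop) : Prop :=
  S gone /\ (forall x y, S x -> S y -> S (gmul x y)) /\ (forall x, S x -> S (ginv x)).

Definition nontrivial_sub (S : G -> Prop) : Prop := exists x, S x /\ x <> gone.

Fixpoint npow (v : G) (n : nat) : G :=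
  match n with O => gone | S m => gmul v (npow v m) end.
Definition zpow (v : G) (z : Z) : G :=
  match z with
  | Z0 => gone
  | Zpos p => npow v (Pos.to_nat p)
  | Zneg p => ginv (npow v (Pos.to_nat p))
  end.

Definition inf_cyclic_gen (S : G -> Prop) (v : G) : Prop :=
  (forall x, S x <-> exists n : Z, x = zpow v n) /\
  (forall n : Z, zpow v n = gone -> n = 0%Z).
Definition infinite_cyclic (S : G -> Prop) : Prop := exists v, inf_cyclic_gen S v.

Fixpoint word_eval {I : Type} (w : list (I * G)) : G :=
  match w with nil => gone | cons a t => gmul a.2 (word_eval t) end.
Fixpoint letters_ok {I : Type} (H : I -> G -> Prop) (w : list (I * G)) : Prop :=
  match w with nil => True | cons a t => (H a.1 a.2 /\ a.2 <> gone) /\ letters_ok H t end.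
Fixpoint alternating {I : Type} (w : list (I * G)) : Prop :=
  match w with
  | cons a ((cons b _) as t) => a.1 <> b.1 /\ alternating t
  | _ => True
  end.
Definition reduced {I : Type} (H : I -> G -> Prop) (w : list (I * G)) : Prop :=
  letters_ok H w /\ alternating w.

(* The subgroup S of G is the (internal) free product of the subgroups H i,
   i : I : every element of S is the value of a unique reduced word. *)
Definition free_product_on {I : Type} (S : G -> Prop) (H : I -> G -> Prop) : Prop :=
  (forall i, subgroup (H i)) /\ (forall i x, H i x -> S x) /\
  (forall x, S x -> exists w, reduced H w /\ word_eval w = x) /\
  (forall w1 w2, reduced H w1 -> reduced H w2 -> word_eval w1 = word_eval w2 -> w1 = w2).

Definition free_product {I : Type} (H : I -> G -> Prop) : Prop :=
  free_product_on (fun _ => True) H.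

Definition freely_indecomposable (S : G -> Prop) : Prop :=
  subgroup S /\ nontrivial_sub S /\
  ~ (exists A B : G -> Prop, nontrivial_sub A /\ nontrivial_sub B /\
       free_product_on S (fun b : bool => if b then A else B)).

Definition hom (Q : group) (f : G -> Q) : Prop := forall x y, f (gmul x y) = gmul (f x) (f y).

Definition automorphism (f : G -> G) : Prop :=
  hom f /\ (forall x y, f x = f y -> x = y) /\ (forall y, exists x, f x = y).

Definition factor_aut {I : Type} (H : I -> G -> Prop) (phi : G -> G) : Prop :=
  automorphism phi /\ exists i,
    (forall x, H i x -> H i (phi x)) /\
    (forall y, H i y -> exists x, H i x /\ phi x = y) /\
    (forall j x, j <> i -> H j x -> phi x = x).

Definition transvection {I : Type} (H : I -> G -> Prop) (phi : G -> G) : Prop :=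
  automorphism phi /\ exists i j v w,
    i <> j /\ inf_cyclic_gen (H i) v /\ H j w /\
    (phi v = gmul v w \/ phi v = gmul w v) /\
    (forall l x, l <> i -> H l x -> phi x = x).

Definition partial_conj {I : Type} (H : I -> G -> Prop) (phi : G -> G) : Prop :=
  automorphism phi /\ exists i j g,
    i <> j /\ H j g /\
    (forall x, H i x -> phi x = gmul (ginv g) (gmul x g)) /\
    (forall l x, l <> i -> H l x -> phi x = x).

Inductive generated (Gen : (G -> G) -> Prop) : (G -> G) -> Prop :=
  | gen_id : generated Gen (fun x => x)
  | gen_base f : Gen f -> generated Gen f
  | gen_comp f g : generated Gen f -> generated Gen g -> generated Gen (fun x => f (g x))
  | gen_inv f g : generated Gen f -> (forall x, g (f x) = x /\ f (g x) = x) -> generated Gen g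
  | gen_ext f g : generated Gen f -> (forall x, f x = g x) -> generated Gen g.

Definition Aut0 {I : Type} (H : I -> G -> Prop) : (G -> G) -> Prop :=
  generated (fun phi => factor_aut H phi \/ transvection H phi \/ partial_conj H phi).

End Groups.
Arguments hom {G Q}.

(* Main.v *)
Require Import Defs.
From Stdlib Require Import ZArith Classical.
From mathcomp Require Import all_boot.
Set Implicit Arguments. Unset Strict Implicit.

Lemma mulgV' (G : group) (x : G) : gmul x (ginv x) = gone.
Proof.
  rewrite -[gmul x (ginv x)]gmul1 -[X in gmul X (gmul x _)](gmulV (ginv x)).
  rewrite -gmulA (gmulA (ginv x) x (ginv x)) gmulV gmul1 gmulV //.
Qed.

Lemma mulg1' (G : group) (x : G) : gmul x gone = x.
Proof. by rewrite -(gmulV x) gmulA mulgV' gmul1. Qed.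

Lemma inv_uniq (G : group) (a b : G) : gmul a b = gone -> a = ginv b.
Proof.
  move=> E. by rewrite -(mulg1' a) -(mulgV' b) gmulA E gmul1.
Qed.

Lemma invinv (G : group) (x : G) : ginv (ginv x) = x.
Proof. symmetry; apply: inv_uniq; exact: mulgV'. Qed.

Lemma invM (G : group) (x y : G) : ginv (gmul x y) = gmul (ginv y) (ginv x).
Proof.
  symmetry; apply: inv_uniq.
  by rewrite -gmulA (gmulA (ginv x) x y) gmulV gmul1 gmulV.
Qed.

Lemma inv1 (G : group) : ginv (@gone G) = gone.
Proof. symmetry; apply: inv_uniq; exact: gmul1. Qed.

Lemma hom1 (G Q : group) (f : G -> Q) : hom f -> f gone = gone.
Proof.
  move=> hf. have E : gmul (f gone) (f gone) = f gone by rewrite -hf gmul1.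
  by rewrite -(gmul1 (f gone)) -{1}(gmulV (f gone)) -gmulA E gmulV.
Qed.

Lemma homV (G Q : group) (f : G -> Q) x : hom f -> f (ginv x) = ginv (f x).
Proof.
  move=> hf; apply: inv_uniq. by rewrite -hf gmulV hom1.
Qed.

Inductive NC (k : nat) (G : group) (H : 'I_k -> G -> Prop) : G -> Prop :=
| nc_gen (l : 'I_k) g h : (2 <= l)%N -> H l h -> NC H (gmul g (gmul h (ginv g)))
| nc_one : NC H gone
| nc_mul x y : NC H x -> NC H y -> NC H (gmul x y)
| nc_inv x : NC H x -> NC H (ginv x).

Lemma NC_conj k (G : group) (H : 'I_k -> G -> Prop) g x : NC H x -> NC H (gmul g (gmul x (ginv g))).
Proof.
  elim=> {x}.
  - move=> l g' h hl hh.
    have -> : gmul g (gmul (gmul g' (gmul h (ginv g'))) (ginv g)) =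
              gmul (gmul g g') (gmul h (ginv (gmul g g'))).
      by rewrite invM !gmulA.
    exact: nc_gen hl hh.
  - by rewrite gmul1 mulgV'; exact: nc_one.
  - move=> x y _ Hx _ Hy.
    have -> : gmul g (gmul (gmul x y) (ginv g)) =
      gmul (gmul g (gmul x (ginv g))) (gmul g (gmul y (ginv g))).
      by rewrite !gmulA -(gmulA _ (ginv g) g) gmulV mulg1'.
    exact: nc_mul.
  - move=> x _ Hx.
    have -> : gmul g (gmul (ginv x) (ginv g)) = ginv (gmul g (gmul x (ginv g))).
      by rewrite !invM invinv gmulA.
    exact: nc_inv.
Qed.

Lemma NC_H k (G : group) (H : 'I_k -> G -> Prop) (l : 'I_k) h : (2 <= l)%N -> H l h -> NC H h.
Proof.
  move=> hl hh. have := nc_gen gone hl hh. by rewrite inv1 mulg1' gmul1.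
Qed.

Lemma NC_ker k (G : group) (H : 'I_k -> G -> Prop) (Q : group) (p : G -> Q) :
  hom p -> (forall i : 'I_k, (2 <= i)%N -> forall x, H i x -> p x = gone) ->
  forall x, NC H x -> p x = gone.
Proof.
  move=> hp hH x; elim=> {x}.
  - move=> l g h hl hh. by rewrite !hp (hH l hl h hh) gmul1 homV // mulgV'.
  - exact: hom1.
  - move=> x y _ Hx _ Hy. by rewrite hp Hx Hy gmul1.
  - move=> x _ Hx. by rewrite homV // Hx inv1.
Qed.

Definition invN k (G : group) (H : 'I_k -> G -> Prop) (f : G -> G) := forall x, NC H x <-> NC H (f x).

Lemma gen_invN k (G : group) (H : 'I_k -> G -> Prop) Gen :
  (forall f, Gen f -> invN H f) -> forall f, generated Gen f -> invN H f.
Proof.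
  move=> hG f; elim=> {f}.
  - by [].
  - by move=> f /hG.
  - move=> f g _ Hf _ Hg x. by rewrite Hg Hf.
  - move=> f g _ Hf hfg x. have [_ E] := hfg x. by rewrite (Hf (g x)) E.
  - move=> f g _ Hf E x. by rewrite -E.
Qed.

Lemma aut_invN k (G : group) (H : 'I_k -> G -> Prop) phi :
  automorphism phi ->
  (forall (l : 'I_k) h, (2 <= l)%N -> H l h -> NC H (phi h)) ->
  (forall (l : 'I_k) h, (2 <= l)%N -> H l h -> exists n, NC H n /\ phi n = h) ->
  invN H phi.
Proof.
  move=> [hom [inj sur]] hC hD x0; split.
  - elim=> {x0}.
    + move=> l g h hl hh. rewrite !hom homV //. apply: NC_conj. exact: hC hl hh.
    + rewrite hom1 //; exact: nc_one.
    + move=> x y _ Hx _ Hy. rewrite hom. exact: nc_mul.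
    + move=> x _ Hx. rewrite homV //. exact: nc_inv.
  - have D : forall y, NC H y -> exists n, NC H n /\ phi n = y.
      move=> y; elim=> {y}.
      + move=> l g h hl hh. have [g0 Eg] := sur g. have [n [Hn En]] := hD l h hl hh.
        exists (gmul g0 (gmul n (ginv g0))); split; first exact: NC_conj.
        by rewrite !hom homV // Eg En.
      + exists gone; split; [exact: nc_one | exact: hom1].
      + move=> a b _ [n [Hn En]] _ [m [Hm Em]]. exists (gmul n m); split.
          exact: nc_mul. by rewrite hom En Em.
      + move=> a _ [n [Hn En]]. exists (ginv n); split. exact: nc_inv. by rewrite homV // En.
    move=> /D [n [Hn En]]. by rewrite -(inj _ _ En).
Qed.

Fixpoint allP {A : Type} (P : A -> Prop) (l : list A) : Prop :=
  match l with nil => True | cons a t => P a /\ allP P t end.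

Lemma filter_step k (G : group) (H : 'I_k -> G -> Prop) (w : list ('I_k * G)) :
  letters_ok H w ->
  exists n, NC H n /\ word_eval w = gmul n (word_eval (filter (fun a => (nat_of_ord a.1 < 2)%N) w)).
Proof.
  elim: w => [|a t IH] /=.
  - move=> _; exists gone; split; [exact: nc_one | by rewrite gmul1].
  - move=> [[ha _] /IH [n [Hn En]]].
    case: ifP => hlt /=.
    + exists (gmul a.2 (gmul n (ginv a.2))); split; first exact: NC_conj.
      by rewrite En -!gmulA (gmulA (ginv a.2)) gmulV gmul1.
    + exists (gmul a.2 n); split.
        apply: nc_mul => //. apply: (NC_H (l := a.1)) => //. by rewrite leqNgt hlt.
      by rewrite En gmulA.
Qed.

Lemma filter_ok k (G : group) (H : 'I_k -> G -> Prop) (w : list ('I_k * G)) :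
  letters_ok H w ->
  allP (fun a => (nat_of_ord a.1 < 2)%N /\ H a.1 a.2) (filter (fun a => (nat_of_ord a.1 < 2)%N) w).
Proof.
  elim: w => [|a t IH] //= [[ha _] /IH Ht]. case: ifP => //= h; try by split.
Qed.

Lemma alt_tail {I : Type} (G : group) (b : I * G) u : alternating (b :: u) -> alternating u.
Proof. by case: u => [|c u] //= [_ ?]. Qed.

Lemma reduce_ex k (G : group) (H : 'I_k -> G -> Prop) :
  (forall i, subgroup (H i)) ->
  forall t : list ('I_k * G), allP (fun a => (nat_of_ord a.1 < 2)%N /\ H a.1 a.2) t ->
  exists u, reduced H u /\ allP (fun a => (nat_of_ord a.1 < 2)%N) u /\ word_eval u = word_eval t.
Proof.
  move=> hsub; elim=> [|a t IH] /=.
  - move=> _; exists nil; by [].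
  - move=> [[ha1 ha2] /IH [u [[ul ua] [uall ue]]]].
    case: (classic (a.2 = gone)) => [a1|an1].
    + exists u; split; [by [] | split => //]. by rewrite a1 gmul1.
    + case: u ul ua uall ue => [|b u'] ul ua uall ue.
      * exists [:: a]; split; [by [] | split => //=]. by rewrite -ue.
      * case: (eqVneq a.1 b.1) => [eab|nab].
        - case: (classic (gmul a.2 b.2 = gone)) => [c1|cn1].
          ++ exists u'; split; [split; [exact: ul.2 | exact: alt_tail ua] |].
             split; first exact: uall.2.
             by rewrite -ue /= gmulA c1 gmul1.
          ++ exists ((a.1, gmul a.2 b.2) :: u'); split; [split|split].
             ** split; last exact: ul.2. split => //=.
                have [_ [hm _]] := hsub a.1. apply: hm => //. rewrite eab. exact: ul.1.1.
             ** move: ua => /=. case: u' {ul uall ue} => [|d u''] //=. by rewrite eab.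
             ** split; [exact: ha1 | exact: uall.2].
             ** by rewrite -ue /= gmulA.
        - exists [:: a, b & u']; split; [split|split].
          ** by split.
          ** split; [exact: (elimN eqP nab) | exact: ua].
          ** by split.
          ** by rewrite -ue.
Qed.

Definition iso_on k (G Q : group) (H : 'I_k -> G -> Prop) (p : G -> Q) (n : nat) (Qn : Q -> Prop) :=
  forall i : 'I_k, nat_of_ord i = n ->
     (forall x, H i x -> Qn (p x)) /\
     (forall x y, H i x -> H i y -> p x = p y -> x = y) /\
     (forall y, Qn y -> exists x, H i x /\ p x = y).

Lemma letter_map k (G Q : group) (H : 'I_k -> G -> Prop) (p : G -> Q) Q1 Q2 :
  (forall i, subgroup (H i)) -> hom p -> iso_on H p 0 Q1 -> iso_on H p 1 Q2 ->
  forall a : 'I_k * G, (nat_of_ord a.1 < 2)%N -> H a.1 a.2 -> a.2 <> gone ->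
  (if (nat_of_ord a.1 == 0)%N then Q1 else Q2) (p a.2) /\ p a.2 <> gone.
Proof.
  move=> hsub hp h0 h1 [i x] /= hi hx nx.
  have hs : forall n Qn, iso_on H p n Qn -> nat_of_ord i = n -> Qn (p x) /\ p x <> gone.
    move=> n Qn hn ei. have [A [B _]] := hn i ei. split; first exact: A.
    move=> px1. apply: nx. apply: B => //; first by have [] := hsub i.
    by rewrite px1 hom1.
  case: eqP => ei; first exact: hs h0 ei.
  apply: hs h1 _. move: hi ei. case: (nat_of_ord i) => [|[|m]] //.
Qed.

Lemma map_red k (G Q : group) (H : 'I_k -> G -> Prop) (p : G -> Q) Q1 Q2 :
  (forall i, subgroup (H i)) -> hom p -> iso_on H p 0 Q1 -> iso_on H p 1 Q2 ->
  forall u : list ('I_k * G), reduced H u -> allP (fun a => (nat_of_ord a.1 < 2)%N) u ->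
  reduced (fun b : bool => if b then Q1 else Q2)
     (map (fun a => ((nat_of_ord a.1 == 0)%N, p a.2)) u) /\
  word_eval (map (fun a => ((nat_of_ord a.1 == 0)%N, p a.2)) u) = p (word_eval u).
Proof.
  move=> hsub hp h0 h1. elim=> [|a t IH] /=.
  - move=> _ _. by rewrite hom1.
  - move=> [[[ha na] lt] alt] [a2 at'].
    have [[lt' alt'] et] := IH (conj lt (alt_tail alt)) at'.
    split; last by rewrite et hp.
    split; first by split; [exact: letter_map | exact: lt'].
    move: alt at' alt' {IH lt lt' et}. case: t => [|b t] //= [nab alt] [b2 _] alt'.
    split => //. move=> E; apply: nab. apply: val_inj.
    have key : forall x y : nat, (x < 2)%N -> (y < 2)%N -> (x == 0)%N = (y == 0)%N -> x = y.
      by move=> [|[|x]] [|[|y]].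
    exact: key a2 b2 E.
Qed.

Theorem lemma5p2 (k : nat) (G : group) (H : 'I_k -> G -> Prop)
  (Q : group) (Q1 Q2 : Q -> Prop) (p : G -> Q) :
  3 <= k ->
  free_product H ->
  (forall i, freely_indecomposable (H i)) ->
  (forall i : 'I_k, 2 <= i -> ~ infinite_cyclic (H i)) ->
  free_product (fun b : bool => if b then Q1 else Q2) ->
  hom p ->
  (* p is an isomorphism from the first factor onto Q1 *)
  (forall i : 'I_k, nat_of_ord i = 0 ->
     (forall x, H i x -> Q1 (p x)) /\
     (forall x y, H i x -> H i y -> p x = p y -> x = y) /\
     (forall y, Q1 y -> exists x, H i x /\ p x = y)) ->
  (* p is an isomorphism from the second factor onto Q2 *)
  (forall i : 'I_k, nat_of_ord i = 1 ->
     (forall x, H i x -> Q2 (p x)) /\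
     (forall x y, H i x -> H i y -> p x = p y -> x = y) /\
     (forall y, Q2 y -> exists x, H i x /\ p x = y)) ->
  (* p is trivial on the remaining factors *)
  (forall i : 'I_k, 2 <= i -> forall x, H i x -> p x = gone) ->
  forall phi, Aut0 H phi ->
  forall x, p x = gone <-> p (phi x) = gone.
Proof.
  move=> hk hfp hind hnc hfq hp h0 h1 h2 phi hphi.
  have [hsub [_ [hex _]]] := hfp.
  have hq := hfq; move: hq => [_ [_ [_ quniq]]].
  have ker : forall x, p x = gone <-> NC H x.
    move=> x; split; last exact: NC_ker.
    move=> px.
    have [w [[wl wa] we]] := hex x I.
    have [n [Hn En]] := filter_step wl.
    have [u [ur [ua ue]]] := reduce_ex hsub (filter_ok wl).
    have [mr me] := map_red hsub hp h0 h1 ur ua.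
    have pn := NC_ker hp h2 Hn.
    have pu : p (word_eval u) = gone.
      have := hp n (word_eval (filter (fun a => (nat_of_ord a.1 < 2)%N) w)). rewrite -En we pn gmul1 px ue. by move<-.
    have := quniq _ nil mr (conj I I). rewrite me pu => /(_ erefl).
    case: u {ur ua me pu mr} ue => [|? ?] ue //= _.
    by rewrite -we En -ue /= mulg1'.
  move=> x; rewrite !ker.
  move: x; apply: (gen_invN _ hphi) => f [hf|[hf|hf]].
  - have [fa [i [hi [hs hfix]]]] := hf.
    apply: aut_invN => // l h hl hh; case: (eqVneq l i) => [eli|/eqP nli].
    + subst l. exact: NC_H hl (hi _ hh).
    + rewrite (hfix l h nli hh). exact: NC_H hl hh.
    + subst l. have [y [hy ey]] := hs h hh. exists y; split => //. exact: NC_H hl hy.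
    + exists h; split; [exact: NC_H hl hh | exact: hfix l h nli hh].
  - have [fa [i [j [v [w [_ [hv [_ [_ hfix]]]]]]]]] := hf.
    have nli : forall l : 'I_k, (2 <= l)%N -> l <> i.
      move=> l hl eli; subst l. apply: (hnc i hl). by exists v.
    apply: aut_invN => // l h hl hh.
    + rewrite (hfix l h (nli l hl) hh). exact: NC_H hl hh.
    + exists h; split; [exact: NC_H hl hh | exact: hfix l h (nli l hl) hh].
  - have [fa [i [j [g [nij [hg [hconj hfix]]]]]]] := hf.
    have [fhom _] := fa.
    have fg : f g = g by apply: hfix hg; move=> eji; apply: nij; rewrite eji.
    apply: aut_invN => // l h hl hh; case: (eqVneq l i) => [eli|/eqP nli].
    + subst l. rewrite (hconj h hh).
      have := NC_conj (ginv g) (NC_H hl hh). by rewrite invinv.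
    + rewrite (hfix l h nli hh). exact: NC_H hl hh.
    + subst l. exists (gmul g (gmul h (ginv g))); split; first exact: nc_gen hl hh.
      rewrite !fhom homV // fg (hconj h hh).
      by rewrite !gmulA mulgV' gmul1 -gmulA mulgV' mulg1'.
    + exists h; split; [exact: NC_H hl hh | exact: hfix l h nli hh].
Qed.
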